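(* Let $A=\{A_m\}_{m=1}^{\mathsf{p}}\subset\mathcal{B}(\mathbb{C}^{D_1})$ and $B=\{B_m\}_{m=1}^{\mathsf{p}}\subset\mathcal{B}(\mathbb{C}^{D_2})$, and let $E_1=\sum_m\overline{A_m}\otimes A_m$, $E_2=\sum_m\overline{B_m}\otimes B_m$. Let $\psi_1\in \mathbb{C}^{D_1}$ and $\psi_2\in\mathbb{C}^{D_2}$ be unit vectors. Then for all $d\ge1$ and all $F\in\mathcal{B}((\mathbb{C}^{\mathsf{p}})^{\otimes d})$, \[ \|(E_F)^{\dagger} (\psi_1\otimes\psi_2)\| \leq \|F\| \sqrt{\|E_1^d\|\,\|E_2^d\|},\qquad \|E_F (\psi_1\otimes\psi_2)\| \leq \|F\| \sqrt{\|E_1^d\|\,\|E_2^d\|}, \] \[ \|E_F\|_F \leq D_1D_2 \|F\| \sqrt{\|E_1^d\|\,\|E_2^d\|}. \]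
   Context: For $Z\in\mathcal{B}(\mathbb{C}^\mathsf{p})$ define $E_Z=\sum_{m,m'=1}^{\mathsf{p}}\langle m|Z|m'\rangle\,\overline{A_m}\otimes B_{m'}\in\mathcal{B}(\mathbb{C}^{D_1}\otimes\mathbb{C}^{D_2})$ (overline denotes entrywise complex conjugation in the standard basis), and for $Z_1,\dots,Z_d\in\mathcal{B}(\mathbb{C}^\mathsf{p})$ set $E_{Z_1\otimes\cdots\otimes Z_d}=E_{Z_1}E_{Z_2}\cdots E_{Z_d}$; extend linearly to define $E_F$ for all $F\in\mathcal{B}((\mathbb{C}^\mathsf{p})^{\otimes d})$. $\|\cdot\|$ denotes the operator norm (Euclidean norm for vectors) and $\|\cdot\|_F$ the Frobenius norm. *)

(* Defs.v *)
From HB Require Import structures.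
From mathcomp Require Import all_boot all_order all_algebra.
From mathcomp Require Import all_classical all_reals.
From mathcomp Require Import complex mxtens.
Set Implicit Arguments. Unset Strict Implicit. Unset Printing Implicit Defensive.
Import Order.TTheory GRing.Theory Num.Theory.
Local Open Scope ring_scope.
Local Open Scope complex_scope.

Section Defs.
Variable R : realType.
Local Notation C := R[i].

Definition abs2 (z : C) : R := complex.Re z ^+ 2 + complex.Im z ^+ 2.

(* Frobenius norm; on column vectors 'cV_n = 'M_(n,1) it is the Euclidean norm *)
Definition fnorm {m n : nat} (M : 'M[C]_(m, n)) : R :=
  Num.sqrt (\sum_(i < m) \sum_(j < n) abs2 (M i j)).

Definition opnorm {m n : nat} (M : 'M[C]_(m, n)) : R :=
  sup [set fnorm (M *m v) | v in [set v : 'cV[C]_n | fnorm v = 1]]%classic.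

Definition conjmx {m n : nat} (M : 'M[C]_(m, n)) : 'M[C]_(m, n) := map_mx conjc M.
Definition adjmx {m n : nat} (M : 'M[C]_(m, n)) : 'M[C]_(n, m) := (conjmx M)^T.

(* basis labels of (C^p)^{(x) d}: multi-indices (m_1,...,m_d) *)
Lemma card_multi_index (p d : nat) : #|{ffun 'I_d -> 'I_p}| = (p ^ d)%N.
Proof. by rewrite card_ffun !card_ord. Qed.

Definition midx {p d : nat} (m : {ffun 'I_d -> 'I_p}) : 'I_(p ^ d)%N :=
  cast_ord (card_multi_index p d) (enum_rank m).

(* E_F = sum_{m,m'} F_{m,m'} (conj A_{m_1} (x) B_{m'_1}) ... (conj A_{m_d} (x) B_{m'_d}),
   the linear extension of E_{Z_1 (x) ... (x) Z_d} = E_{Z_1} ... E_{Z_d}. *)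
Definition EF {p D1 D2 d : nat} (A : 'I_p -> 'M[C]_D1) (B : 'I_p -> 'M[C]_D2)
    (F : 'M[C]_(p ^ d)%N) : 'M[C]_(D1 * D2) :=
  \sum_(m : {ffun 'I_d -> 'I_p}) \sum_(m' : {ffun 'I_d -> 'I_p})
     F (midx m) (midx m') *: \prod_(k < d) (conjmx (A (m k)) *t B (m' k)).

Definition transfer {p D : nat} (A : 'I_p -> 'M[C]_D) : 'M[C]_(D * D) :=
  \sum_(m < p) conjmx (A m) *t A m.

End Defs.

(* Main.v *)
Require Import Defs.
From HB Require Import structures.
From mathcomp Require Import all_boot all_order all_algebra.
From mathcomp Require Import all_classical all_reals.
From mathcomp Require Import complex mxtens.
From mathcomp Require Import ring.
Import Order.TTheory GRing.Theory Num.Theory.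
Local Open Scope ring_scope.

Set Implicit Arguments.
Unset Strict Implicit.
Section Aux.
Variable R : realType.
Local Notation C := R[i].

Definition ns {m n} (M : 'M[C]_(m,n)) : C := \sum_i \sum_j `|M i j| ^+ 2.

Lemma ns_ge0 m n (M : 'M[C]_(m,n)) : 0 <= ns M.
Proof. by apply: sumr_ge0 => i _; apply: sumr_ge0 => j _; rewrite exprn_ge0. Qed.

Lemma fnormE m n (M : 'M[C]_(m,n)) : ((fnorm M ^+ 2)%:C)%C = ns M.
Proof.
rewrite /fnorm sqr_sqrtr; last first.
  by apply: sumr_ge0 => i _; apply: sumr_ge0 => j _; rewrite /abs2 addr_ge0 ?sqr_ge0.
rewrite rmorph_sum; apply: eq_bigr => i _; rewrite rmorph_sum; apply: eq_bigr => j _.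
exact: (add_Re2_Im2 (M i j)).
Qed.

Lemma CS {I : finType} (x y : I -> C) :
  `|\sum_i x i * (y i)^*| ^+ 2 <= (\sum_i `|x i| ^+ 2) * (\sum_i `|y i| ^+ 2).
Proof.
pose u := \row_(k < #|I|) x (enum_val k).
pose v := \row_(k < #|I|) y (enum_val k).
have H : `|dotmx u v| ^+2 <= dotmx u u * dotmx v v := (CauchySchwarz (@dotmx C #|I|) u v).1.
move: H; rewrite !dotmxE !mxE.
have E (z w : I -> C) : \sum_j (\row_(k < #|I|) z (enum_val k)) 0 j * ((\row_(k < #|I|) w (enum_val k)) ^t*)%sesqui j 0 = \sum_i z i * (w i)^*.
  rewrite (reindex (@enum_rank I)) /=; last first.
    by exists enum_val => i _; rewrite ?enum_rankK ?enum_valK.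
  by apply: eq_bigr => i _; rewrite !mxE enum_rankK.
rewrite !E.
have E2 (z : I -> C) : \sum_i z i * (z i)^* = \sum_i `|z i| ^+ 2.
  by apply: eq_bigr => i _; rewrite normCK.
by rewrite !E2.
Qed.

Lemma ns_cV n (v : 'cV[C]_n) : ns v = \sum_i `|v i 0| ^+ 2.
Proof. by apply: eq_bigr => i _; rewrite big_ord1. Qed.

Lemma conjmxE m n (M : 'M[C]_(m,n)) i j : Defs.conjmx M i j = (M i j)^*.
Proof. by rewrite /Defs.conjmx mxE. Qed.

Lemma adjmxE m n (M : 'M[C]_(m,n)) i j : adjmx M i j = (M j i)^*.
Proof. by rewrite /adjmx !mxE. Qed.

Lemma ns_conj m n (M : 'M[C]_(m,n)) : ns (Defs.conjmx M) = ns M.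
Proof. by apply: eq_bigr => i _; apply: eq_bigr => j _; rewrite conjmxE norm_conjC. Qed.

Lemma ns_adj m n (M : 'M[C]_(m,n)) : ns (adjmx M) = ns M.
Proof.
rewrite /ns exchange_big; apply: eq_bigr => i _; apply: eq_bigr => j _.
by rewrite adjmxE norm_conjC.
Qed.

Lemma ns_cols m n (M : 'M[C]_(m,n)) : ns M = \sum_j ns (col j M).
Proof.
rewrite /ns exchange_big; apply: eq_bigr => j _; apply: eq_bigr => i _.
by rewrite big_ord1 mxE.
Qed.

Lemma ns_scale m n c (M : 'M[C]_(m,n)) : ns (c *: M) = `|c| ^+ 2 * ns M.
Proof.
rewrite /ns mulr_sumr; apply: eq_bigr => i _; rewrite mulr_sumr; apply: eq_bigr => j _.
by rewrite mxE normrM exprMn.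
Qed.

Lemma ns_eq0 m n (M : 'M[C]_(m,n)) : ns M = 0 -> M = 0.
Proof.
move=> H; apply/matrixP => i j; rewrite mxE.
have H1 : \sum_j `|M i j| ^+ 2 = 0.
  by apply: (psumr_eq0P _ H) => // k _; apply: sumr_ge0 => l _; exact: exprn_ge0.
have H2 : `|M i j| ^+ 2 = 0.
  by apply: (psumr_eq0P _ H1) => // k _; exact: exprn_ge0.
by move/eqP: H2; rewrite sqrf_eq0 normr_eq0 => /eqP.
Qed.

Lemma ns_mul_le m n (M : 'M[C]_(m,n)) (v : 'cV[C]_n) : ns (M *m v) <= ns M * ns v.
Proof.
rewrite !ns_cV /ns mulr_suml; apply: ler_sum => i _.
rewrite mxE.
move: (CS (fun j => M i j) (fun j => (v j 0)^*)).
rewrite (eq_bigr (fun j => M i j * v j 0)) => [|j _]; last by rewrite conjCK.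
rewrite [X in _ <= _ * X -> _](eq_bigr (fun j => `|v j 0| ^+ 2)) => // j _.
by rewrite norm_conjC.
Qed.

Definition bnd {m n} (M : 'M[C]_(m,n)) (c : C) := forall x : 'cV[C]_n, ns (M *m x) <= c * ns x.

Lemma bnd_mx m n k (M : 'M[C]_(m,n)) c (X : 'M[C]_(n,k)) : bnd M c -> ns (M *m X) <= c * ns X.
Proof.
move=> H; rewrite !ns_cols mulr_sumr; apply: ler_sum => j _.
by rewrite !colE -mulmxA; apply: H.
Qed.

Lemma conjmxM m n k (M : 'M[C]_(m,n)) (X : 'M[C]_(n,k)) :
  Defs.conjmx (M *m X) = Defs.conjmx M *m Defs.conjmx X.
Proof. by rewrite /Defs.conjmx map_mxM. Qed.

Lemma conjmxK m n (M : 'M[C]_(m,n)) : Defs.conjmx (Defs.conjmx M) = M.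
Proof. by apply/matrixP => i j; rewrite !conjmxE conjCK. Qed.

Lemma bnd_conj m n (M : 'M[C]_(m,n)) c : bnd M c -> bnd (Defs.conjmx M) c.
Proof.
move=> H x; rewrite -[x]conjmxK -conjmxM ns_conj conjmxK.
by rewrite -{2}[x]conjmxK ns_conj.
Qed.

Lemma bnd_adj m n (M : 'M[C]_(m,n)) c : 0 <= c -> bnd M c -> bnd (adjmx M) c.
Proof.
move=> c0 H y; set z := adjmx M *m y.
have E : ns z = \sum_k (M *m z) k 0 * (y k 0)^*.
  rewrite ns_cV; under [RHS]eq_bigr do rewrite mxE mulr_suml.
  rewrite exchange_big; apply: eq_bigr => i _.
  rewrite normCK {2}/z mxE rmorph_sum mulr_sumr; apply: eq_bigr => k _.
  by rewrite adjmxE rmorphM /= conjCK mulrCA mulrA.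
have H1 : ns z ^+ 2 <= ns (M *m z) * ns y.
  have := CS (fun k => (M *m z) k 0) (fun k => y k 0).
  by rewrite -E -!ns_cV ger0_norm ?ns_ge0.
have H2 : ns z ^+ 2 <= (c * ns y) * ns z.
  apply: (le_trans H1); rewrite mulrAC; apply: ler_wpM2r; first exact: ns_ge0.
  exact: H.
have [z0|zp] := eqVneq (ns z) 0.
  by rewrite z0 mulr_ge0 ?ns_ge0.
have zpos : 0 < ns z by rewrite lt_def zp ns_ge0.
by move: H2; rewrite expr2 ler_pM2r.
Qed.

Lemma fnorm_ge0 m n (M : 'M[C]_(m,n)) : 0 <= fnorm M.
Proof. exact: sqrtr_ge0. Qed.

Lemma sq_le (x y : R) : 0 <= x -> 0 <= y -> x ^+ 2 <= y ^+ 2 -> x <= y.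
Proof. by move=> hx hy; rewrite ler_pXn2r // nnegrE. Qed.

Lemma fnorm_le m n m' n' (M : 'M[C]_(m,n)) (N : 'M[C]_(m',n')) :
  ns M <= ns N -> fnorm M <= fnorm N.
Proof.
rewrite -!fnormE lecR => h; apply: sq_le => //; exact: fnorm_ge0.
Qed.

Lemma ns_unit n (v : 'cV[C]_n) : fnorm v = 1 -> ns v = 1.
Proof. by move=> h; rewrite -fnormE h expr1n. Qed.

Lemma opnorm_ub m n (M : 'M[C]_(m,n)) (v : 'cV[C]_n) : fnorm v = 1 -> fnorm (M *m v) <= opnorm M.
Proof.
move=> hv; apply: ub_le_sup; last by exists v.
exists (fnorm M) => _ [w /= hw <-]; apply: fnorm_le.
by have := ns_mul_le M w; rewrite (ns_unit hw) mulr1.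
Qed.

Lemma opnorm_ge0 m n (M : 'M[C]_(m,n)) : 0 <= opnorm M.
Proof.
have [[v hv]|nv] := pselect (exists v : 'cV[C]_n, fnorm v = 1).
  exact: le_trans (fnorm_ge0 (M *m v)) (opnorm_ub M hv).
rewrite /opnorm.
suff -> : [set fnorm (M *m v) | v in [set v : 'cV[C]_n | fnorm v = 1]]%classic = set0 by rewrite sup0.
by apply/seteqP; split => // x [v hv _]; exfalso; apply: nv; exists v.
Qed.

Lemma opnorm_bnd m n (M : 'M[C]_(m,n)) : bnd M ((opnorm M ^+ 2)%:C)%C.
Proof.
move=> x.
have [x0|xn0] := eqVneq (ns x) 0.
  by rewrite x0 (ns_eq0 x0) mulmx0 mulr0 /ns big1 // => i _; rewrite big1 // => j _; rewrite mxE normr0 expr0n.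
set t := fnorm x.
have ht : ns x = ((t%:C)%C) ^+ 2 by rewrite -fnormE rmorphXn.
have tpos : 0 < t.
  rewrite lt_def fnorm_ge0 andbT; apply: (contra_neq _ xn0) => t0; by rewrite ht t0 rmorph0 expr0n.
have tcpos : 0 < (t%:C)%C by rewrite ltcR.
set s := ((t%:C)%C)^-1.
have s0 : 0 <= s by rewrite invr_ge0 ltW.
have hs : s ^+ 2 * (t%:C)%C ^+ 2 = 1 by rewrite -exprMn mulVf ?expr1n // gt_eqF.
have hx' : fnorm (s *: x) = 1.
  apply/eqP; rewrite -sqrp_eq1 ?fnorm_ge0 //; apply/eqP; apply: (fmorph_inj (real_complex R)).
  by rewrite /= fnormE ns_scale ger0_norm // ht hs.
have h1 := opnorm_ub M hx'.
have h2 : ns (M *m (s *: x)) <= ((opnorm M ^+ 2)%:C)%C.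
  rewrite -fnormE lecR ler_pXn2r ?nnegrE ?fnorm_ge0 ?opnorm_ge0 //.
move: h2; rewrite -scalemxAr ns_scale ger0_norm // => h2.
have := ler_wpM2r (ltW (exprn_gt0 2 tcpos)) h2.
by rewrite mulrAC hs mul1r -ht.
Qed.

Lemma sum_tens m n (G : 'I_(m * n) -> C) :
  \sum_(k < m * n) G k = \sum_(r < m) \sum_(s < n) G (mxtens_index (r, s)).
Proof.
rewrite pair_big /=; apply: (reindex (fun p : 'I_m * 'I_n => mxtens_index (p.1, p.2))).
exists (@mxtens_unindex m n) => [[i j] _|k _] /=; first by rewrite mxtens_indexK.
exact: mxtens_unindexK.
Qed.

Lemma ns_tens m n p q (X : 'M[C]_(m,n)) (Y : 'M[C]_(p,q)) : ns (X *t Y) = ns X * ns Y.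
Proof.
rewrite /ns sum_tens mulr_suml; apply: eq_bigr => r _.
rewrite mulr_sumr; apply: eq_bigr => s _.
rewrite sum_tens mulr_suml; apply: eq_bigr => i _.
rewrite mulr_sumr; apply: eq_bigr => j _.
by rewrite tensmxE normrM exprMn.
Qed.

Lemma tens11 m n : (1%:M : 'M[C]_m) *t (1%:M : 'M[C]_n) = 1%:M.
Proof.
apply/matrixP => k l.
case: (mxtens_indexP k) => i j; case: (mxtens_indexP l) => i' j'.
rewrite tensmxE !mxE.
have inj := can_inj (@mxtens_indexK m n).
have [<-|ne] := eqVneq i i'; have [<-|ne'] := eqVneq j j'; rewrite ?eqxx ?mulr1 ?mulr0 ?mul0r //.
- by rewrite (inj_eq inj) xpair_eqE eqxx (negbTE ne').
- by rewrite (inj_eq inj) xpair_eqE (negbTE ne).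
- by rewrite (inj_eq inj) xpair_eqE (negbTE ne).
Qed.

Lemma prod_tens m n d (X : 'I_d -> 'M[C]_m) (Y : 'I_d -> 'M[C]_n) :
  \prod_(k < d) (X k *t Y k) = (\prod_(k < d) X k) *t (\prod_(k < d) Y k).
Proof.
elim: d X Y => [|d IH] X Y.
  by rewrite !big_ord0 tens11.
by rewrite !big_ord_recr /= IH -!mulmxE tensmx_mul.
Qed.

Lemma conjmx_prod n d (X : 'I_d -> 'M[C]_n) :
  Defs.conjmx (\prod_(k < d) X k) = \prod_(k < d) Defs.conjmx (X k).
Proof.
elim: d X => [|d IH] X.
  by rewrite !big_ord0; apply/matrixP => i j; rewrite conjmxE !mxE rmorph_nat.
by rewrite !big_ord_recr /= -IH -!mulmxE conjmxM.
Qed.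

Lemma conjmx_tens m n p q (X : 'M[C]_(m,n)) (Y : 'M[C]_(p,q)) :
  Defs.conjmx (X *t Y) = Defs.conjmx X *t Defs.conjmx Y.
Proof. exact: map_mxT. Qed.

Lemma adjmx_tens m n p q (X : 'M[C]_(m,n)) (Y : 'M[C]_(p,q)) :
  adjmx (X *t Y) = adjmx X *t adjmx Y.
Proof. by rewrite /adjmx conjmx_tens trmx_tens. Qed.

Lemma normsq_sum (I : finType) (a : I -> C) :
  `|\sum_r a r| ^+ 2 = \sum_r \sum_s a r * (a s)^*.
Proof. by rewrite normCK rmorph_sum mulr_suml; apply: eq_bigr => r _; rewrite mulr_sumr. Qed.

Lemma sum4_swap (I J : finType) (F : I -> I -> J -> J -> C) :
  \sum_i \sum_k \sum_r \sum_s F i k r s = \sum_r \sum_s \sum_i \sum_k F i k r s.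
Proof.
transitivity (\sum_i \sum_r \sum_s \sum_k F i k r s).
  apply: eq_bigr => i _; rewrite exchange_big; apply: eq_bigr => r _; exact: exchange_big.
rewrite exchange_big; apply: eq_bigr => r _; exact: exchange_big.
Qed.

Lemma gram_swap (I J : finType) (t : I -> J -> C) :
  \sum_i \sum_k `|\sum_r t i r * (t k r)^*| ^+ 2 =
  \sum_r \sum_s `|\sum_i (t i r)^* * t i s| ^+ 2.
Proof.
under eq_bigr do under eq_bigr do rewrite normsq_sum.
under [RHS]eq_bigr do under eq_bigr do rewrite normsq_sum exchange_big.
rewrite sum4_swap; apply: eq_bigr => r _; apply: eq_bigr => s _.
apply: eq_bigr => i _; apply: eq_bigr => k _.
rewrite !rmorphM /= !conjCK; ring.
Qed.

Lemma nsGram N D (c : 'I_N -> 'M[C]_D) (y : 'cV[C]_D) :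
  let T := \matrix_(r < D, i < N) (c i *m y) r 0 in
  ns (T^T *m Defs.conjmx T) = ns ((\sum_i Defs.conjmx (c i) *t c i) *m (Defs.conjmx y *t y)).
Proof.
move=> T.
have E : (\sum_i Defs.conjmx (c i) *t c i) *m (Defs.conjmx y *t y) =
         \sum_i Defs.conjmx (c i *m y) *t (c i *m y).
  by rewrite mulmx_suml; apply: eq_bigr => i _; rewrite tensmx_mul conjmxM.
rewrite E /ns sum_tens.
transitivity (\sum_r \sum_s `|\sum_i ((c i *m y) r 0)^* * (c i *m y) s 0| ^+ 2); last first.
  apply: eq_bigr => r _; apply: eq_bigr => s _.
  rewrite sum_tens !big_ord1 summxE.
  by congr (`|_| ^+ 2); apply: eq_bigr => i _; rewrite tensmxE conjmxE.
rewrite -(gram_swap (fun i r => (c i *m y) r 0)).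
apply: eq_bigr => i _; apply: eq_bigr => k _; rewrite !mxE.
by congr (`|_| ^+ 2); apply: eq_bigr => r _; rewrite !mxE.
Qed.

Lemma adjmxM m n k (A : 'M[C]_(m,n)) (B : 'M[C]_(n,k)) : adjmx (A *m B) = adjmx B *m adjmx A.
Proof. by rewrite /adjmx conjmxM trmx_mul. Qed.

Lemma adjmx_tr m n (A : 'M[C]_(m,n)) : adjmx (A^T) = Defs.conjmx A.
Proof. by apply/matrixP => i j; rewrite adjmxE conjmxE mxE. Qed.

Lemma adjmx_conj m n (A : 'M[C]_(m,n)) : adjmx (Defs.conjmx A) = A^T.
Proof. by apply/matrixP => i j; rewrite adjmxE conjmxE mxE conjCK. Qed.

Lemma ns_trace m n (M : 'M[C]_(m,n)) : ns M = \tr (adjmx M *m M).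
Proof.
rewrite /ns /mxtrace exchange_big; apply: eq_bigr => j _; rewrite mxE.
by apply: eq_bigr => i _; rewrite adjmxE normCKC.
Qed.

Lemma sum2_entry (I J : finType) m n (G : I -> J -> 'M[C]_(m,n)) k l :
  (\sum_i \sum_j G i j) k l = \sum_i \sum_j G i j k l.
Proof. by rewrite summxE; apply: eq_bigr => i _; rewrite summxE. Qed.

Lemma core N D1 D2 (a : 'I_N -> 'M[C]_D1) (b : 'I_N -> 'M[C]_D2) (F : 'M[C]_N)
  (f e1 e2 : C) (psi1 : 'cV[C]_D1) (psi2 : 'cV[C]_D2) :
  ns psi1 = 1 -> ns psi2 = 1 -> 0 <= f ->
  bnd (adjmx F) f -> bnd (\sum_i Defs.conjmx (a i) *t a i) e1 ->
  bnd (\sum_i Defs.conjmx (b i) *t b i) e2 ->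
  ns ((\sum_i \sum_j F i j *: (Defs.conjmx (a i) *t b j)) *m (psi1 *t psi2)) ^+ 2
    <= f ^+ 2 * e1 * e2.
Proof.
move=> h1 h2 f0 hF hA hB.
set TA := \matrix_(r < D1, i < N) (a i *m Defs.conjmx psi1) r 0.
set TB := \matrix_(s < D2, j < N) (b j *m psi2) s 0.
set W := Defs.conjmx TA *m F *m TB^T.
have Ew : ns ((\sum_i \sum_j F i j *: (Defs.conjmx (a i) *t b j)) *m (psi1 *t psi2)) = ns W.
  have -> : (\sum_i \sum_j F i j *: (Defs.conjmx (a i) *t b j)) *m (psi1 *t psi2) =
      \sum_i \sum_j F i j *: (Defs.conjmx (a i *m Defs.conjmx psi1) *t (b j *m psi2)).
    rewrite mulmx_suml; apply: eq_bigr => i _; rewrite mulmx_suml; apply: eq_bigr => j _.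
    by rewrite -scalemxAl tensmx_mul conjmxM conjmxK.
  rewrite /ns sum_tens; apply: eq_bigr => r _; apply: eq_bigr => s _.
  rewrite sum_tens !big_ord1; congr (`|_| ^+ 2).
  rewrite sum2_entry.
  rewrite exchange_big /= [RHS]mxE; apply: eq_bigr => j _.
  rewrite [in RHS]mxE mulr_suml; apply: eq_bigr => i _.
  by rewrite [in LHS]mxE tensmxE !conjmxE !mxE mulrA [F i j * _]mulrC.
set GA := TA^T *m Defs.conjmx TA.
set HB := TB^T *m Defs.conjmx TB.
set X := adjmx F *m GA *m F.
have Etr : ns W = \tr (X *m HB).
  rewrite ns_trace /W !adjmxM adjmx_tr adjmx_conj /X /GA /HB.
  rewrite !mulmxA -[in LHS]mulmxA -[in LHS]mulmxA -[in LHS]mulmxA -[in LHS]mulmxA.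
  by rewrite mxtrace_mulC !mulmxA.
have hGA : ns GA <= e1.
  rewrite /GA /TA nsGram; apply: le_trans (hA _) _.
  rewrite (ns_tens (Defs.conjmx (Defs.conjmx psi1)) (Defs.conjmx psi1)).
  by rewrite !ns_conj h1 !mulr1.
have hHB : ns HB <= e2.
  rewrite /HB /TB nsGram; apply: le_trans (hB _) _.
  rewrite (ns_tens (Defs.conjmx psi2) psi2).
  by rewrite ns_conj h2 !mulr1.
have hX : ns X <= f ^+ 2 * ns GA.
  rewrite /X -mulmxA; apply: le_trans (bnd_mx _ hF) _.
  rewrite -ns_adj adjmxM expr2 -mulrA; apply: ler_wpM2l => //.
  by apply: le_trans (bnd_mx _ hF) _; rewrite ns_adj.
have hCS : `|\tr (X *m HB)| ^+ 2 <= ns X * ns HB.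
  rewrite /mxtrace; under eq_bigr do rewrite mxE.
  rewrite pair_bigA /=.
  have := CS (fun p : 'I_N * 'I_N => X p.1 p.2) (fun p => (HB p.2 p.1)^*).
  have q1 : \sum_(p : 'I_N * 'I_N) X p.1 p.2 * (HB p.2 p.1)^*^* = \sum_(p : 'I_N * 'I_N) X p.1 p.2 * HB p.2 p.1.
    by apply: eq_bigr => p _; rewrite conjCK.
  have q2 : \sum_(p : 'I_N * 'I_N) `|X p.1 p.2| ^+ 2 = ns X by rewrite /ns pair_bigA.
  have q3 : \sum_(p : 'I_N * 'I_N) `|(HB p.2 p.1)^*| ^+ 2 = ns HB.
    by rewrite /ns exchange_big pair_bigA; apply: eq_bigr => p _; rewrite norm_conjC.
  by rewrite q1 q2 q3.
rewrite Ew Etr -[X in X ^+ 2 <= _](@ger0_norm _ (\tr (X *m HB))); last by rewrite -Etr ns_ge0.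
apply: le_trans hCS _.
apply: le_trans (ler_wpM2r (ns_ge0 HB) hX) _.
rewrite -mulrA -mulrA; apply: ler_wpM2l; first by rewrite exprn_ge0.
apply: le_trans (ler_wpM2r (ns_ge0 HB) hGA) _.
apply: ler_wpM2l; first exact: le_trans (ns_ge0 GA) hGA.
exact: hHB.
Qed.

Lemma adjmx_sum (I : finType) m n (G : I -> 'M[C]_(m,n)) :
  adjmx (\sum_i G i) = \sum_i adjmx (G i).
Proof.
apply/matrixP => k l; rewrite adjmxE !summxE rmorph_sum.
by apply: eq_bigr => i _; rewrite adjmxE.
Qed.

Lemma adjmx_scale m n c (M : 'M[C]_(m,n)) : adjmx (c *: M) = c^* *: adjmx M.
Proof. by apply/matrixP => k l; rewrite adjmxE [in RHS]mxE adjmxE mxE rmorphM. Qed.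

Lemma conjmx_adj m n (M : 'M[C]_(m,n)) : Defs.conjmx (adjmx M) = M^T.
Proof. by apply/matrixP => k l; rewrite conjmxE adjmxE mxE conjCK. Qed.

Lemma ns_delta n (r : 'I_n) : ns (delta_mx r 0 : 'cV[C]_n) = 1.
Proof.
rewrite ns_cV (bigD1 r) //= big1 => [|i ne]; first by rewrite !mxE !eqxx /= normr1 expr1n addr0.
by rewrite !mxE (negbTE ne) /= normr0 expr0n.
Qed.

Lemma conv (x o o1 o2 : R) : 0 <= x -> 0 <= o -> 0 <= o1 -> 0 <= o2 ->
  (((x ^+ 2)%:C)%C) ^+ 2 <= (((o ^+ 2)%:C)%C) ^+ 2 * ((o1 ^+ 2)%:C)%C * ((o2 ^+ 2)%:C)%C ->
  x <= o * Num.sqrt (o1 * o2).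
Proof.
move=> x0 o0 p1 p2; rewrite -!rmorphXn -!rmorphM lecR => H.
have K0 : 0 <= o * Num.sqrt (o1 * o2) by rewrite mulr_ge0 ?sqrtr_ge0.
apply: sq_le => //; apply: sq_le; rewrite ?exprn_ge0 //.
have -> : (o * Num.sqrt (o1 * o2)) ^+ 2 = o ^+ 2 * (o1 * o2).
  by rewrite exprMn sqr_sqrtr ?mulr_ge0.
by have -> : (o ^+ 2 * (o1 * o2)) ^+ 2 = (o ^+ 2) ^+ 2 * o1 ^+ 2 * o2 ^+ 2 by ring.
Qed.

End Aux.
Unset Implicit Arguments.
Set Strict Implicit.

Section Main.
Variables (R : realType) (p d : nat).
Local Notation C := R[i].

Definition hidx (i : 'I_(p ^ d)) : {ffun 'I_d -> 'I_p} :=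
  enum_val (cast_ord (esym (card_multi_index p d)) i).

Lemma midx_h i : midx (hidx i) = i.
Proof. by rewrite /midx /hidx enum_valK cast_ordKV. Qed.

Lemma h_midx m : hidx (midx m) = m.
Proof. by rewrite /midx /hidx cast_ordK enum_rankK. Qed.

Lemma hidx_bij : bijective hidx.
Proof. exists midx => [i|m]; [exact: midx_h | exact: h_midx]. Qed.

Definition prodA {D} (X : 'I_p -> 'M[C]_D) (i : 'I_(p ^ d)) := \prod_(k < d) X (hidx i k).

Lemma EF_eq D1 D2 (A : 'I_p -> 'M[C]_D1) (B : 'I_p -> 'M[C]_D2) (F : 'M[C]_(p ^ d)) :
  EF A B F = \sum_i \sum_j F i j *: (Defs.conjmx (prodA A i) *t prodA B j).
Proof.
rewrite /EF (reindex hidx) /=; last by apply: onW_bij; exact: hidx_bij.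
apply: eq_bigr => i _; rewrite (reindex hidx) /=; last by apply: onW_bij; exact: hidx_bij.
apply: eq_bigr => j _; rewrite !midx_h prod_tens conjmx_prod.
by [].
Qed.

Lemma transfer_pow D (X : 'I_p -> 'M[C]_D) :
  transfer X ^+ d = \sum_i Defs.conjmx (prodA X i) *t prodA X i.
Proof.
rewrite /transfer -{1}(card_ord d) -prodr_const bigA_distr_bigA.
rewrite (reindex hidx) /=; last by apply: onW_bij; exact: hidx_bij.
by apply: eq_bigr => i _; rewrite prod_tens conjmx_prod.
Qed.

End Main.
Arguments prodA {R p} d {D} X i.


Theorem lemma6 (R : realType) (p D1 D2 : nat)
    (A : 'I_p -> 'M[R[i]]_D1) (B : 'I_p -> 'M[R[i]]_D2)
    (psi1 : 'cV[R[i]]_D1) (psi2 : 'cV[R[i]]_D2) :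
  fnorm psi1 = 1 -> fnorm psi2 = 1 ->
  forall (d : nat), (1 <= d)%N -> forall F : 'M[R[i]]_(p ^ d)%N,
    let K := opnorm F * Num.sqrt (opnorm (transfer A ^+ d) * opnorm (transfer B ^+ d)) in
    [/\ fnorm (adjmx (EF A B F) *m (psi1 *t psi2)) <= K,
        fnorm (EF A B F *m (psi1 *t psi2)) <= K
      & fnorm (EF A B F) <= (D1 * D2)%:R * K].
Proof.
move=> h1 h2 d hd F K.
have n1 := ns_unit h1; have n2 := ns_unit h2.
pose f := (((opnorm F) ^+ 2)%:C)%C.
pose e1 := (((opnorm (transfer A ^+ d)) ^+ 2)%:C)%C.
pose e2 := (((opnorm (transfer B ^+ d)) ^+ 2)%:C)%C.
have f0 : 0 <= f by rewrite /f ler0c exprn_ge0 // opnorm_ge0.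
have e10 : 0 <= e1 by rewrite /e1 ler0c exprn_ge0 // opnorm_ge0.
have hF : bnd F f := opnorm_bnd F.
have hFa : bnd (adjmx F) f := bnd_adj f0 hF.
have hA : bnd (\sum_i Defs.conjmx (prodA d A i) *t prodA d A i) e1.
  by rewrite -transfer_pow; exact: opnorm_bnd.
have hB : bnd (\sum_i Defs.conjmx (prodA d B i) *t prodA d B i) e2.
  by rewrite -transfer_pow; exact: opnorm_bnd.
have K0 : 0 <= K by rewrite /K mulr_ge0 ?opnorm_ge0 ?sqrtr_ge0.
have key : forall (x : 'cV[R[i]]_D1) (y : 'cV[R[i]]_D2), ns x = 1 -> ns y = 1 ->
    fnorm (EF A B F *m (x *t y)) <= K.
  move=> x y hx hy; apply: conv; rewrite ?fnorm_ge0 ?opnorm_ge0 //.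
  by rewrite fnormE EF_eq; exact: core hx hy f0 hFa hA hB.
split.
- have -> : adjmx (EF A B F) = \sum_i \sum_j (Defs.conjmx F) i j *:
      (Defs.conjmx (adjmx (prodA d A i)) *t adjmx (prodA d B j)).
    rewrite EF_eq adjmx_sum; apply: eq_bigr => i _; rewrite adjmx_sum; apply: eq_bigr => j _.
    by rewrite adjmx_scale adjmx_tens conjmxE conjmx_adj adjmx_conj.
  apply: conv; rewrite ?fnorm_ge0 ?opnorm_ge0 //.
  rewrite fnormE; apply: core n1 n2 f0 _ _ _.
  + by rewrite adjmx_conj -conjmx_adj; exact: bnd_conj hFa.
  + have -> : \sum_i Defs.conjmx (adjmx (prodA d A i)) *t adjmx (prodA d A i) =
              adjmx (\sum_i Defs.conjmx (prodA d A i) *t prodA d A i).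
      by rewrite adjmx_sum; apply: eq_bigr => i _; rewrite adjmx_tens conjmx_adj adjmx_conj.
    exact: bnd_adj e10 hA.
  + have e20 : 0 <= e2 by rewrite /e2 ler0c exprn_ge0 // opnorm_ge0.
    have -> : \sum_i Defs.conjmx (adjmx (prodA d B i)) *t adjmx (prodA d B i) =
              adjmx (\sum_i Defs.conjmx (prodA d B i) *t prodA d B i).
      by rewrite adjmx_sum; apply: eq_bigr => i _; rewrite adjmx_tens conjmx_adj adjmx_conj.
    exact: bnd_adj e20 hB.
- exact: key n1 n2.
have hcol : forall k, ns (col k (EF A B F)) <= (((K ^+ 2)%:C)%C).
  move=> k; case: (mxtens_indexP k) => r s.
  have Ed : col (mxtens_index (r, s)) (EF A B F) =
            EF A B F *m ((delta_mx r (0 : 'I_1) : 'cV[R[i]]_D1) *t (delta_mx s (0 : 'I_1) : 'cV[R[i]]_D2)).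
    rewrite colE; congr (_ *m _); apply/matrixP => i j.
    case: (mxtens_indexP i) => i1 i2; case: (@mxtens_indexP 1 1 j) => j1 j2.
    rewrite !mxE !mxtens_indexK /= [j1]ord1 [j2]ord1 eqxx !andbT (inj_eq (can_inj (@mxtens_indexK D1 D2))) xpair_eqE.
    by rewrite -natrM mulnb.
  rewrite Ed -fnormE lecR ler_pXn2r ?nnegrE ?fnorm_ge0 //.
  by apply: key; rewrite ns_delta.
have hs : ns (EF A B F) <= (((K ^+ 2) *+ (D1 * D2))%:C)%C.
  rewrite ns_cols; apply: (le_trans (y := \sum_(k < D1 * D2) ((K ^+ 2)%:C)%C)).
    by apply: ler_sum => k _; exact: hcol k.
  by rewrite sumr_const card_ord rmorphMn.
move: hs; rewrite -fnormE lecR => hs.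
apply: sq_le; [exact: fnorm_ge0 | exact: mulr_ge0 (ler0n _ _) K0 | ].
apply: (le_trans hs); rewrite [X in _ <= X]exprMn -mulr_natl; apply: ler_wpM2r; first exact: exprn_ge0.
rewrite -natrX ler_nat; case: (D1 * D2)%N => // n.
by rewrite expnS expn1 leq_pmulr.
Qed.
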